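(* Fix $k, n \in \mathbb{N}$. For $i \in \{0, \ldots, n\}$ let $$P_{k,n,i} = \left\{ x \in \Delta(n+1, k(n+1)) : \sum_{s=1}^{kt} x_{ki+s} \leq t, \quad t = 1, \ldots, n \right\},$$ where indices of coordinates are taken modulo $k(n+1)$ (with representatives in $\{1,\ldots,k(n+1)\}$). Then for $i \neq j$ the interiors of $P_{k,n,i}$ and $P_{k,n,j}$ are disjoint, and $\Delta(n+1, k(n+1)) = \bigcup_{i=0}^{n} P_{k,n,i}$.
   Context: The hypersimplex is $\Delta(k,n) = \{ (x_1,\ldots,x_n) \in [0,1]^n : \sum_{i=1}^n x_i = k\}$. Interiors are taken relative to the affine hull of the hypersimplex. *)

(* Defs.v *)
From HB Require Import structures.
From mathcomp Require Import all_boot all_order all_algebra.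
From mathcomp Require Export reals.
Set Implicit Arguments. Unset Strict Implicit. Unset Printing Implicit Defensive.
Import Order.TTheory GRing.Theory Num.Theory.
Local Open Scope ring_scope.

(* Points of R^N are functions 'I_N -> R; coordinate j : 'I_N (0-based)
   corresponds to the paper's coordinate j+1 (1-based). *)

Definition hypersimplex (R : realType) (m N : nat) (x : 'I_N -> R) : Prop :=
  (forall j, 0 <= x j <= 1) /\ \sum_(j < N) x j = m%:R.
Arguments hypersimplex {R} m N x.

Definition coordmod (R : realType) (N : nat) (x : 'I_N -> R) (a : nat) : R :=
  if @insub nat (fun j => (j < N)%N) 'I_N (a %% N)%N is Some j then x j else 0.

(* P_{k,n,i}: the paper's x_{ki+s} (1-based, s = 1..kt) is the 0-based
   coordinate (k i + s - 1) mod k(n+1), i.e. coordmod x (k*i + s') for s' < k t. *)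
Definition Pkni (R : realType) (k n i : nat) (x : 'I_(k * n.+1)%N -> R) : Prop :=
  hypersimplex n.+1 (k * n.+1)%N x /\
  forall t : nat, (1 <= t <= n)%N ->
    \sum_(s < (k * t)%N) coordmod x (k * i + s)%N <= t%:R.
Arguments Pkni {R} k n i x.

Definition affine_hull (R : realType) (N : nat) (S : ('I_N -> R) -> Prop)
  (y : 'I_N -> R) : Prop :=
  exists (m : nat) (p : 'I_m -> 'I_N -> R) (c : 'I_m -> R),
    (forall l, S (p l)) /\ \sum_(l < m) c l = 1 /\
    forall j, y j = \sum_(l < m) c l * p l j.

(* Interior of A relative to the affine hull of S (topology of R^N, here via
   the sup-norm balls, which induce the standard topology). *)
Definition relint (R : realType) (N : nat) (S A : ('I_N -> R) -> Prop)
  (x : 'I_N -> R) : Prop :=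
  A x /\ exists e : R, 0 < e /\
    forall y, affine_hull S y -> (forall j, `|y j - x j| < e) -> A y.

(* Main.v *)
Require Import Defs.
From HB Require Import structures.
From mathcomp Require Import all_boot all_order all_algebra.
From mathcomp Require Import reals.
From mathcomp Require Import zify ring lra.
Set Implicit Arguments. Unset Strict Implicit.
Import Order.TTheory GRing.Theory Num.Theory.
Local Open Scope ring_scope.

Lemma coordmodD (R : realType) N (x : 'I_N -> R) a :
  coordmod x (N + a) = coordmod x a.
Proof. by rewrite /coordmod modnDl. Qed.

Lemma coordmod_lt (R : realType) N (x : 'I_N -> R) a (h : (a < N)%N) :
  coordmod x a = x (Ordinal h).
Proof.
rewrite /coordmod (modn_small h); case: insubP => [j _ hj|]; last by rewrite h.
by congr x; apply: val_inj.
Qed.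

Lemma coordmod_pert (R : realType) N (x : 'I_N -> R) (g : nat -> R) a :
  (0 < N)%N ->
  coordmod (fun j => x j + g (val j)) a = coordmod x a + g (a %% N)%N.
Proof.
move=> N0; rewrite /coordmod; case: insubP => [j _ hj|]; last by rewrite ltn_pmod.
by rewrite hj.
Qed.

Definition Bk (R : realType) k p (x : 'I_(k * p) -> R) (m : nat) : R :=
  \sum_(s < k) coordmod x (k * m + s)%N.

Definition Sk (R : realType) k p (x : 'I_(k * p) -> R) (a : nat) : R :=
  \sum_(u < a) (Bk x u - 1).

Lemma block_sum (R : realType) k p (x : 'I_(k * p) -> R) i t :
  \sum_(s < k * t) coordmod x (k * i + s)%N = \sum_(u < t) Bk x (i + u)%N.
Proof.
elim: t => [|t IH]; first by rewrite muln0 !big_ord0.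
rewrite big_ord_recr /= -IH.
have e : (k * t.+1 = k * t + k)%N by rewrite mulnS addnC.
rewrite e big_split_ord /=; congr (_ + _).
by apply: eq_bigr => s _; rewrite /= mulnDr addnA.
Qed.

Lemma Sk_split (R : realType) k p (x : 'I_(k * p) -> R) i t :
  Sk x (i + t) = Sk x i + \sum_(u < t) (Bk x (i + u)%N - 1).
Proof. by rewrite /Sk big_split_ord. Qed.

Lemma Bk_per (R : realType) k p (x : 'I_(k * p) -> R) u :
  Bk x (p + u) = Bk x u.
Proof.
apply: eq_bigr => s _; rewrite mulnDr -addnA coordmodD //.
Qed.

Lemma Sk_p (R : realType) k p (x : 'I_(k * p) -> R) :
  hypersimplex p (k * p) x -> Sk x p = 0.
Proof.
move=> [_ hs]; rewrite /Sk sumrB.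
have hb := block_sum x 0 p.
have -> : \sum_(u < p) Bk x u = \sum_(j < k * p) x j.
  rewrite (eq_bigr (fun u : 'I_p => Bk x (0 + u)%N)) // -hb.
  by apply: eq_bigr => j _; rewrite muln0 add0n coordmod_lt; congr x; apply: val_inj.
by rewrite hs sumr_const card_ord subrr.
Qed.

Lemma Sk_per (R : realType) k p (x : 'I_(k * p) -> R) a :
  hypersimplex p (k * p) x -> Sk x (p + a) = Sk x a.
Proof.
move=> h; rewrite Sk_split Sk_p // add0r /Sk.
by apply: eq_bigr => u _; rewrite Bk_per.
Qed.
Lemma argmax_nat (R : realType) (f : nat -> R) m :
  exists i, (i < m.+1)%N /\ forall j, (j < m.+1)%N -> f j <= f i.
Proof.
elim: m => [|m [i [hi hm]]].
  by exists 0%N; split => // j; rewrite ltnS leqn0 => /eqP ->.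
case: (leP (f i) (f m.+1)) => h.
  exists m.+1; split => // j; rewrite ltnS leq_eqVlt => /orP [/eqP -> //|hj].
  exact: le_trans (hm _ hj) h.
exists i; split; first by apply: ltnW.
move=> j; rewrite ltnS leq_eqVlt => /orP [/eqP -> |hj]; first exact: ltW.
exact: hm.
Qed.

Lemma sum_diff (R : realType) k p (x : 'I_(k * p) -> R) i t :
  \sum_(s < k * t) coordmod x (k * i + s)%N = Sk x (i + t) - Sk x i + t%:R.
Proof.
rewrite Sk_split block_sum sumrB sumr_const card_ord.
ring.
Qed.

Lemma cover (R : realType) k n (x : 'I_(k * n.+1) -> R) :
  hypersimplex n.+1 (k * n.+1) x -> exists i : 'I_n.+1, Pkni k n i x.
Proof.
move=> hx; have [i [hi hm]] := argmax_nat (Sk x) n.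
exists (Ordinal hi); split => // t /andP [t1 tn].
rewrite sum_diff /= gerDr subr_le0.
case: (ltnP (i + t) n.+1) => h; first exact: hm.
have -> : (i + t = n.+1 + (i + t - n.+1))%N by lia.
rewrite Sk_per //; apply: hm; lia.
Qed.
Lemma sum_ind (R : realType) N a (ha : (a < N)%N) :
  \sum_(j < N) (((val j == a)%:R) : R) = 1.
Proof.
rewrite (bigD1 (Ordinal ha)) //= eqxx big1 ?addr0 // => j hj.
suff -> : (val j == a) = false by [].
apply/negbTE; apply: contra hj => /eqP h; apply/eqP/val_inj; exact: h.
Qed.

Lemma Sk_eq (R : realType) k n (x : 'I_(k * n.+1) -> R) (i j : 'I_n.+1) t :
  hypersimplex n.+1 (k * n.+1) x ->
  (i + t = j \/ i + t = n.+1 + j)%N -> Sk x (i + t) = Sk x j.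
Proof. by move=> hx [] ->; rewrite ?Sk_per. Qed.

Lemma disj (R : realType) k n (hk : (1 < k)%N) (i j : 'I_n.+1) (x : 'I_(k * n.+1) -> R) :
  i != j ->
  relint (hypersimplex n.+1 (k * n.+1)%N) (Pkni k n i) x ->
  Pkni k n j x -> False.
Proof.
move=> hij [[hx hPi] [e [e0 he]]] [_ hPj].
have [t [/andP [t1 tn] [h1 h2]]] : exists t, (1 <= t <= n)%N /\
   (i + t = j \/ i + t = n.+1 + j)%N /\ (j + (n.+1 - t) = i \/ j + (n.+1 - t) = n.+1 + i)%N.
  have hi := ltn_ord i; have hj := ltn_ord j.
  have hne : (val i != val j) by [].
  case: (ltnP i j) => h.
    exists (j - i)%N; split; [apply/andP; split|split]; lia.
  have h' : (j < i)%N by rewrite ltn_neqAle eq_sym hne h.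
  exists (j + n.+1 - i)%N; split; [apply/andP; split|split]; lia.
have si := sum_diff x i t; have sj := sum_diff x j (n.+1 - t).
have pi := hPi t (introT andP (conj t1 tn)).
have pj := hPj (n.+1 - t)%N ltac:(apply/andP; split; lia).
rewrite (Sk_eq hx h1) in si; rewrite (Sk_eq hx h2) in sj.
have hsx : \sum_(s < k * t) coordmod x (k * i + s)%N = t%:R.
  rewrite si in pi; rewrite sj in pj.
  have : Sk x j - Sk x i <= 0 by move: pi; rewrite gerDr.
  have : Sk x i - Sk x j <= 0 by move: pj; rewrite gerDr.
  by rewrite si; lra.
set N := (k * n.+1)%N.
have N0 : (0 < N)%N by rewrite /N muln_gt0; apply/andP; split; lia.
have ktN : (k * t < N)%N by rewrite /N ltn_mul2l; apply/andP; split; lia.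
have kt0 : (0 < k * t)%N by rewrite muln_gt0; apply/andP; split; lia.
set a0 := ((k * i) %% N)%N; set b0 := ((k * i + k * t) %% N)%N.
have ab : (a0 == b0) = false.
  rewrite /a0 /b0 -{1}[(k * i)%N]addn0 eqn_modDl mod0n (modn_small ktN).
  by apply/negbTE; rewrite eq_sym -lt0n.
set eps := e / 2.
have eps0 : 0 < eps by rewrite /eps divr_gt0.
set ind := fun m : nat => ((m == a0)%:R - (m == b0)%:R : R).
set g := fun m : nat => eps * ind m.
set y := fun j0 : 'I_N => x j0 + g (val j0).
have hPy : Pkni k n i y.
  apply: he; last first.
    move=> j0; rewrite /y addrAC subrr add0r /g /ind normrM (gtr0_norm eps0).
    have : `|((val j0 == a0)%:R - (val j0 == b0)%:R : R)| <= 1.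
      by case: (val j0 == a0); case: (val j0 == b0); rewrite /= ?mulr1n ?mulr0n ?subrr ?subr0 ?sub0r ?normrN ?normr1 ?normr0.
    move=> hb; have h0 := normr_ge0 ((val j0 == a0)%:R - (val j0 == b0)%:R : R).
    rewrite /eps in eps0 *; nra.
  have kR : (k%:R : R) != 0 by rewrite pnatr_eq0; lia.
  have kge : (2 : R) <= k%:R by rewrite -(ler_nat R 2 k) in hk *.
  have kpos : (0 : R) < k%:R by lra.
  set w := (k%:R : R)^-1.
  have w0 : 0 < w by rewrite /w invr_gt0.
  have w2 : w * 2 <= 1 by rewrite /w ler_pdivrMl // mulr1.
  have indb : forall j0 : 'I_N, -1 <= ind j0 <= 1 /\ (0 <= 1 + ind j0).
    move=> j0; rewrite /ind.
    case ha: (val j0 == a0); case hb: (val j0 == b0); rewrite /= ?mulr1n ?mulr0n; try lra.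
  have sw : \sum_(j0 < N) w = n.+1%:R.
    by rewrite sumr_const card_ord /N -[LHS]mulr_natr natrM /w mulrA mulVf // mul1r.
  have sind : \sum_(j0 < N) ind j0 = 0.
    by rewrite /ind sumrB !sum_ind ?subrr // /a0 /b0 ltn_pmod.
  pose P := fun j0 : 'I_N => w * (1 + ind j0).
  pose Q := fun j0 : 'I_N => w.
  rewrite /affine_hull; exists 3%N; exists (fun l : 'I_3 => if val l == 0%N then x else if val l == 1%N then P else Q);
    exists (fun l : 'I_3 => if val l == 0%N then 1 else if val l == 1%N then eps * k%:R else - (eps * k%:R)).
  split; [|split].
  - case=> [[|[|l]] hl] /=.
    + exact: hx.
    + split.
        move=> j0; have [/andP [h3 h4] h5] := indb j0; apply/andP; split; rewrite /P.
          exact: mulr_ge0 (ltW w0) h5.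
        nra.
      rewrite (eq_bigr (fun j0 : 'I_(k * n.+1) => w + w * ind j0)); last by move=> j0 _; rewrite /P mulrDr mulr1.
      by rewrite big_split /= -mulr_sumr sind mulr0 addr0 sw.
    + split; last exact: sw.
      move=> j0; apply/andP; split; rewrite /Q; lra.
  - rewrite !big_ord_recl big_ord0 /=; ring.
  - move=> j0; rewrite !big_ord_recl big_ord0 /= /y /g /P /Q /w.
    field; exact: kR.
case: hPy => _ /(_ t (introT andP (conj t1 tn))).
have -> : \sum_(s < k * t) coordmod y (k * i + s)%N = t%:R + eps.
  rewrite (eq_bigr (fun s : 'I_(k * t) => coordmod x (k * i + s)%N + g ((k * i + s) %% N)%N));
    last by move=> s _; rewrite coordmod_pert.
  rewrite big_split /= hsx; congr (_ + _).
  rewrite -mulr_sumr /ind sumrB.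
  rewrite (eq_bigr (fun s : 'I_(k * t) => ((val s == 0%N)%:R : R))); last first.
    move=> s _; rewrite /a0 -{2}[(k * i)%N]addn0 eqn_modDl mod0n modn_small //.
    exact: ltn_trans (ltn_ord s) ktN.
  rewrite sum_ind // big1 ?subr0 ?mulr1 // => s _.
  rewrite /b0 eqn_modDl !modn_small //; last exact: ltn_trans (ltn_ord s) ktN.
  by rewrite ltn_eqF.
by rewrite gerDl lt_geF.
Qed.

Theorem mainTheorem2 (R : realType) (k n : nat) (hk : (1 < k)%N) :
  (forall i j : 'I_n.+1, i != j -> forall x : 'I_(k * n.+1)%N -> R,
      ~ (relint (hypersimplex n.+1 (k * n.+1)%N) (Pkni k n i) x /\
         relint (hypersimplex n.+1 (k * n.+1)%N) (Pkni k n j) x)) /\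
  (forall x : 'I_(k * n.+1)%N -> R,
      hypersimplex n.+1 (k * n.+1)%N x <-> exists i : 'I_n.+1, Pkni k n i x).
Proof.
split.
  move=> i j hij x [hi [hj _]]; exact: (disj hk hij hi hj).
move=> x; split; first exact: cover.
by case=> i [].
Qed.
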